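(* Let $U$ be a one-dimensional quantum walk with one defect. Then $U$ is unitary equivalent to \begin{align*} U_{r_\pm,r_0,\nu_1,\nu_2}={}&|e_1^{-1}\rangle\langle r_0e_1^0+e^{i\nu_1}s_0e_2^0|+|e_2^{1}\rangle\langle -e^{i\nu_2}s_0e_1^0+e^{i(\nu_1+\nu_2)}r_0e_2^0|\\ &+\sum_{n\in\mathbb Z\setminus\{0\}}|e_1^{n-1}\rangle\langle r_\pm e_1^n+s_\pm e_2^n|+|e_2^{n+1}\rangle\langle -s_\pm e_1^n+r_\pm e_2^n| \end{align*} for some $0\le r_\pm,r_0\le1$ and $\nu_1,\nu_2\in\mathbb R$, where $s_\varepsilon=\sqrt{1-r_\varepsilon^2}$ ($\varepsilon=\pm,0$). Moreover, writing $U_{r,\nu}=U_{r_\pm,r_0,\nu_1,\nu_2}$, if $0<r_\varepsilon,r'_\varepsilon<1$ and $\nu_i,\nu'_i\in[0,2\pi)$, then $U_{r,\nu}$ and $U_{r',\nu'}$ are unitary equivalent if and only if $r=r'$ and $\nu=\nu'$.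
   Context: Let $\mathcal H_n=\mathbb C^2$ for $n\in\mathbb Z$, $\mathcal H=\bigoplus_{n\in\mathbb Z}\mathcal H_n$, $P_n$ the orthogonal projection onto $\mathcal H_n$, and $\{e_1^n,e_2^n\}$ the standard basis of $\mathcal H_n$; each $\mathcal H_n$ is identified with $\mathbb C^2$. Dirac notation: $|x\rangle\langle y|$ is the operator $z\mapsto\langle y,z\rangle x$ (inner product conjugate-linear in the first argument). A one-dimensional quantum walk is a unitary $U$ on $\mathcal H$ with $\operatorname{rank}(P_nUP_m)=1$ if $m=n\pm1$ and $0$ otherwise. Every such $U$ can be written as $U=\sum_{n\in\mathbb Z}|\xi_{n-1,n}\rangle\langle\zeta_{n-1,n}|+|\xi_{n+1,n}\rangle\langle\zeta_{n+1,n}|$, where $\{\xi_{n,n+1},\xi_{n+1,n}\}_{n}$ and $\{\zeta_{n,n+1},\zeta_{n+1,n}\}_{n}$ are orthonormal bases of $\mathcal H$ with $\xi_{n,n+1},\zeta_{n+1,n}\in\mathcal H_n$ and $\xi_{n+1,n},\zeta_{n,n+1}\in\mathcal H_{n+1}$. $U$ is a one-dimensional quantum walk with one defect if it has such a representation for which there exist $\xi_1,\xi_2,\zeta_1,\zeta_2\in\mathbb C^2$ with $\xi_{n,n+1}=\xi_1$, $\xi_{n,n-1}=\xi_2$, $\zeta_{n-1,n}=\zeta_1$, $\zeta_{n+1,n}=\zeta_2$ for all $n\in\mathbb Z\setminus\{0\}$. Since $U$ and $e^{i\lambda}U$ are identified, unitaries $U_1,U_2$ on $\mathcal H$ are called unitary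 equivalent if there exist $\lambda\in\mathbb R$ and a unitary $W=\bigoplus_nW_n$ ($W_n$ unitary on $\mathcal H_n$) with $e^{i\lambda}WU_1W^*=U_2$. *)

(* Defs.v *)
From HB Require Import structures.
From mathcomp Require Import all_boot all_order all_algebra.
From mathcomp Require Import all_classical all_reals all_analysis.
From mathcomp.real_closed Require Import complex.
Set Implicit Arguments. Unset Strict Implicit. Unset Printing Implicit Defensive.
Import Order.TTheory GRing.Theory Num.Theory.
Local Open Scope ring_scope.
Local Open Scope complex_scope.

Section QW.
Variable R : realType.
Local Notation C := R[i].

(* H_n = C^2, realised as column vectors; H = functions int -> C^2 that are
   square summable (l^2(Z; C^2)). *)
Definition vec := 'cV[C]_2.
Definition state := int -> vec.

Definition e (j : 'I_2) : vec := \col_i (if i == j then 1 else 0).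
Definition e1 : vec := e 0.
Definition e2 : vec := e 1.

Definition bra (y z : vec) : C := \sum_(i < 2) Num.conj (y i 0) * z i 0.

Definition sqn (v : vec) : R :=
  \sum_(i < 2) ((complex.Re (v i 0)) ^+ 2 + (complex.Im (v i 0)) ^+ 2).

Definition l2norm2 (f : state) : \bar R :=
  (\esum_(n in [set: int]) (sqn (f n))%:E)%E.

Definition l2 (f : state) : Prop := (l2norm2 f < +oo)%E.

(* Operators on H are represented by maps on states; only their values on
   l2 matter. *)
Definition op := state -> state.

Definition op_eq (A B : op) : Prop := forall f, l2 f -> A f = B f.

Definition unitary (U : op) : Prop :=
  [/\ (forall (a : C) (f g : state), l2 f -> l2 g ->
          U (fun n => a *: f n + g n) = (fun n => a *: U f n + U g n)),
      (forall f, l2 f -> l2 (U f) /\ l2norm2 (U f) = l2norm2 f) &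
      (forall g, l2 g -> exists2 f, l2 f & U f = g)].

Definition at_site (m : int) (v : vec) : state :=
  fun k => if k == m then v else 0.

(* the 2x2 matrix of P_n U P_m restricted to H_m -> H_n (P_n U P_m vanishes on
   the orthogonal complement of H_m), so rank(P_n U P_m) = \rank (block U n m) *)
Definition block (U : op) (n m : int) : 'M[C]_2 :=
  \matrix_(i < 2, j < 2) (U (at_site m (e j)) n i 0).

Definition quantum_walk (U : op) : Prop :=
  unitary U /\
  forall n m : int,
    \rank (block U n m) = (if (m == n + 1) || (m == n - 1) then 1%N else 0%N).

Definition orthonormal2 (x y : vec) : Prop :=
  [/\ bra x x = 1, bra y y = 1 & bra x y = 0].

(* The operator  sum_n |xi_{n-1,n}><zeta_{n-1,n}| + |xi_{n+1,n}><zeta_{n+1,n}|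
   with  xiR n = xi_{n,n+1}, xiL n = xi_{n,n-1}  (in H_n) and
   zetaL n = zeta_{n-1,n}, zetaR n = zeta_{n+1,n} (in H_n). *)
Definition walk_op (xiR xiL zetaL zetaR : int -> vec) : op :=
  fun f k => bra (zetaL (k + 1)) (f (k + 1)) *: xiR k
           + bra (zetaR (k - 1)) (f (k - 1)) *: xiL k.

Definition qw_one_defect (U : op) : Prop :=
  quantum_walk U /\
  exists (xiR xiL zetaL zetaR : int -> vec),
    [/\ forall n, orthonormal2 (xiR n) (xiL n),
        forall n, orthonormal2 (zetaL n) (zetaR n),
        op_eq U (walk_op xiR xiL zetaL zetaR) &
        exists xi1 xi2 zeta1 zeta2 : vec,
          forall n : int, n != 0 ->
            [/\ xiR n = xi1, xiL n = xi2, zetaL n = zeta1 & zetaR n = zeta2]].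

Definition expi (t : R) : C := cos t +i* sin t.

Definition cR (x : R) : C := x%:C.

Definition sfun (r : R) : R := Num.sqrt (1 - r ^+ 2).

Definition braL (rpm r0 nu1 nu2 : R) (n : int) : vec :=
  if n == 0 then cR r0 *: e1 + (expi nu1 * cR (sfun r0)) *: e2
  else cR rpm *: e1 + cR (sfun rpm) *: e2.
Definition braR (rpm r0 nu1 nu2 : R) (n : int) : vec :=
  if n == 0 then (- (expi nu2 * cR (sfun r0))) *: e1
                 + (expi (nu1 + nu2) * cR r0) *: e2
  else (- cR (sfun rpm)) *: e1 + cR rpm *: e2.

(* U_{r_pm,r_0,nu_1,nu_2} = sum_n |e_1^{n-1}><braL n| + |e_2^{n+1}><braR n| *)
Definition Ustd (rpm r0 nu1 nu2 : R) : op :=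
  fun f k => bra (braL rpm r0 nu1 nu2 (k + 1)) (f (k + 1)) *: e1
           + bra (braR rpm r0 nu1 nu2 (k - 1)) (f (k - 1)) *: e2.

Definition adj2 (M : 'M[C]_2) : 'M[C]_2 := (map_mx Num.conj M)^T.

Definition unitary2 (M : 'M[C]_2) : Prop := adj2 M *m M = 1%:M /\ M *m adj2 M = 1%:M.

Definition unit_equiv (U1 U2 : op) : Prop :=
  exists (lambda : R) (W : int -> 'M[C]_2),
    (forall n, unitary2 (W n)) /\
    op_eq (fun f k => expi lambda *: (W k *m U1 (fun n => adj2 (W n) *m f n) k)) U2.

End QW.

(* Main.v *)
Require Import Defs.
From HB Require Import structures.
From mathcomp Require Import all_boot all_order all_algebra.
From mathcomp Require Import all_classical all_reals all_analysis.
From mathcomp.real_closed Require Import complex.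
From mathcomp Require Import ring lra zify.
Import Order.TTheory GRing.Theory Num.Theory.
Local Open Scope ring_scope.

Set Implicit Arguments. Unset Strict Implicit.
Section S.
Variable R : realType.
Local Notation C := R[i].
Implicit Types (x y : vec R).

Lemma braE x y : bra x y = (x 0 0)^* * y 0 0 + (x 1 0)^* * y 1 0.
Proof. rewrite /bra !big_ord_recl big_ord0 addr0.
  by have -> : lift ord0 ord0 = 1 :> 'I_2 by apply: val_inj.
Qed.

Lemma vec_eq x y : x 0 0 = y 0 0 -> x 1 0 = y 1 0 -> x = y.
Proof.
move=> h0 h1; apply/matrixP => i j; rewrite (ord1 j).
case: i => -[|[|//]] Hi.
  by rewrite (_ : Ordinal Hi = 0) //; apply: val_inj.
by rewrite (_ : Ordinal Hi = 1) //; apply: val_inj.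
Qed.

Lemma e1E : (e1 R 0 0 = 1) * (e1 R 1 0 = 0).
Proof. by rewrite /e1 /e !mxE. Qed.
Lemma e2E : (e2 R 0 0 = 0) * (e2 R 1 0 = 1).
Proof. by rewrite /e2 /e !mxE. Qed.

Lemma mxvE (M : 'M[C]_2) x (i : 'I_2) : (M *m x) i 0 = M i 0 * x 0 0 + M i 1 * x 1 0.
Proof. rewrite mxE !big_ord_recl big_ord0 addr0.
  by have -> : lift ord0 ord0 = 1 :> 'I_2 by apply: val_inj.
Qed.

Lemma cR_conj (r : R) : (cR r)^* = cR r.
Proof. exact: conjc_real. Qed.

Lemma expiD (a b : R) : expi (a + b) = expi a * expi b.
Proof. by rewrite /expi cosD sinD /=; congr (Complex _ _); ring. Qed.

Lemma expi_norm (t : R) : `|expi t| = 1.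
Proof. by rewrite /expi normc_def /= cos2Dsin2 sqrtr1. Qed.

Lemma conjU (z : C) : `|z| = 1 -> z^* = z^-1.
Proof. by move=> h; rewrite invC_norm h expr1n invr1 mul1r. Qed.

Lemma U_neq0 (z : C) : `|z| = 1 -> z != 0.
Proof. by move=> h; apply/eqP => z0; move: h; rewrite z0 normr0 => /eqP; rewrite eq_sym oner_eq0. Qed.

Lemma conjUK (z : C) : `|z| = 1 -> z^* * z = 1.
Proof. by move=> h; rewrite conjU // mulVf // U_neq0. Qed.

Lemma normM1 (a b : C) : `|a| = 1 -> `|b| = 1 -> `|a * b| = 1.
Proof. by move=> ha hb; rewrite normrM ha hb mulr1. Qed.
Lemma normC1 (a : C) : `|a| = 1 -> `|a^*| = 1.
Proof. by move=> ha; rewrite norm_conjC. Qed.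

Lemma normXz1 (x : C) (n : int) : `|x| = 1 -> `|x ^ n| = 1.
Proof.
move=> h; case: n => k /=; first by rewrite normrX h expr1n.
by rewrite normfV normrX h expr1n invr1.
Qed.

Lemma bra_adj (M : 'M[C]_2) x y : bra (M *m x) y = bra x (adj2 M *m y).
Proof.
rewrite !braE !mxvE /adj2 !mxE !rmorphD !rmorphM ?conjCK; ring.
Qed.

Lemma braZl (a : C) x y : bra (a *: x) y = a^* * bra x y.
Proof. by rewrite !braE !mxE !rmorphM; ring. Qed.
Lemma braZr (a : C) x y : bra x (a *: y) = a * bra x y.
Proof. by rewrite !braE !mxE; ring. Qed.
Lemma bra0r x : bra x 0 = 0.
Proof. by rewrite !braE !mxE !mulr0 addr0. Qed.

Lemma bra_conj x y : (bra x y)^* = bra y x.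
Proof. rewrite !braE rmorphD !rmorphM /= !conjCK; ring. Qed.

Lemma bra_unit (M : 'M[C]_2) x y : unitary2 M -> bra (M *m x) (M *m y) = bra x y.
Proof. by case=> h1 _; rewrite bra_adj mulmxA h1 mul1mx. Qed.

Lemma cRD (a b : R) : cR (a + b) = cR a + cR b.
Proof. by apply/eqP; rewrite eq_complex /= addr0 !eqxx. Qed.

Lemma sqn_bra x : cR (sqn x) = bra x x.
Proof.
rewrite /sqn !big_ord_recl big_ord0 addr0 braE cRD /cR !add_Re2_Im2 !normCK.
have -> : lift ord0 ord0 = 1 :> 'I_2 by apply: val_inj.
by rewrite [_ * (_ ^*)]mulrC [(x 1 0) * _]mulrC.
Qed.

Lemma sqn_unit (M : 'M[C]_2) x : unitary2 M -> sqn (M *m x) = sqn x.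
Proof. by move=> h; apply: complexI; rewrite -!/(cR _) !sqn_bra bra_unit. Qed.

Lemma l2_congr (f g : state R) : (forall n, sqn (g n) = sqn (f n)) -> l2 f -> l2 g.
Proof.
move=> h; rewrite /l2 /l2norm2.
by have -> : (fun n => (sqn (g n))%:E) = (fun n => (sqn (f n))%:E) by apply: funext => n; rewrite h.
Qed.

Lemma adj2K (M : 'M[C]_2) : adj2 (adj2 M) = M.
Proof. by apply/matrixP => i j; rewrite !mxE conjCK. Qed.

Lemma l2_adj (W : int -> 'M[C]_2) (f : state R) : (forall n, unitary2 (W n)) -> l2 f ->
  l2 (fun n => adj2 (W n) *m f n).
Proof.
move=> hW; apply: l2_congr => n; apply: sqn_unit.
by case: (hW n) => h1 h2; split; rewrite adj2K.
Qed.

Lemma sqn0 : sqn (0 : vec R) = 0.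
Proof. by apply: complexI; rewrite -/(cR _) sqn_bra bra0r. Qed.

Lemma l2_at_site (m : int) (v : vec R) : l2 (at_site m v).
Proof.
rewrite /l2 /l2norm2.
have -> : (fun n => (sqn (at_site m v n))%:E) =
          (fun n => if n \in [set m]%classic then (sqn v)%:E else 0%E).
  apply: funext => n; rewrite /at_site (_ : (n \in [set m]%classic) = (n == m)); last by apply/idP/idP; rewrite inE /= => /eqP.
  by case: eqP => // _; rewrite sqn0.
rewrite -esum_mkcond esum_set1 ?ltry // lee_fin.
by rewrite /sqn sumr_ge0 // => i _; rewrite addr_ge0 // sqr_ge0.
Qed.

Lemma orth2 (p q : vec R) : bra p p = 1 -> bra q q = 1 -> bra p q = 0 ->
  let E := p 0 0 * q 1 0 - p 1 0 * q 0 0 in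
  [/\ `|E| = 1, q 0 0 = - E * (p 1 0)^* & q 1 0 = E * (p 0 0)^*].
Proof.
rewrite !braE => hp hq hpq E.
set a := p 0 0 in hp hpq E *; set b := p 1 0 in hp hpq E *.
set c := q 0 0 in hq hpq E *; set d := q 1 0 in hq hpq E *.
have hc : c = - E * b^*.
  apply/eqP; rewrite -subr_eq0; apply/eqP.
  have -> : c - - E * b^* = c * (1 - (a^* * a + b^* * b)) + a * (a^* * c + b^* * d) by rewrite /E; ring.
  by rewrite hp hpq subrr; ring.
have hd : d = E * a^*.
  apply/eqP; rewrite -subr_eq0; apply/eqP.
  have -> : d - E * a^* = d * (1 - (a^* * a + b^* * b)) + b * (a^* * c + b^* * d) by rewrite /E; ring.
  by rewrite hp hpq subrr; ring.
split => //.
have h2 : `|E| ^+ 2 = 1.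
  rewrite normCK.
  have -> : E * E^* = E * E^* * (a^* * a + b^* * b) by rewrite hp mulr1.
  rewrite -hq hc hd !rmorphM /= !rmorphN /= !conjCK; ring.
by apply/eqP; rewrite -sqrp_eq1 ?normr_ge0 // h2.
Qed.

Lemma arg_ex (z : C) : `|z| = 1 -> exists t : R, expi t = z.
Proof.
case: z => a b; rewrite normc_def /= => h.
have h1 : Num.sqrt (a ^+ 2 + b ^+ 2) = 1 by case: h.
have hab : a ^+ 2 + b ^+ 2 = 1.
  by rewrite -(sqr_sqrtr (addr_ge0 (sqr_ge0 a) (sqr_ge0 b))) h1 expr1n.
have ha : -1 <= a <= 1 by apply/andP; split; nra.
have hs : Num.sqrt (1 - a ^+ 2) = `|b|.
  by rewrite (_ : 1 - a ^+ 2 = b ^+ 2) ?sqrtr_sqr //; rewrite -hab; ring.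
case: (leP 0 b) => hb.
  exists (acos a); rewrite /expi acosK ?sin_acos // ?hs ?ger0_norm //.
exists (- acos a); rewrite /expi cosN sinN acosK ?sin_acos // ?hs ?ltr0_norm ?opprK //.
Qed.

Lemma unit_vec_r (p : vec R) : bra p p = 1 ->
  let r := Num.sqrt (complex.Re (p 0 0) ^+ 2 + complex.Im (p 0 0) ^+ 2) in
  [/\ 0 <= r <= 1, cR r = `|p 0 0| & cR (Defs.sfun r) = `|p 1 0|].
Proof.
move=> hp r.
set A := complex.Re (p 0 0) ^+ 2 + complex.Im (p 0 0) ^+ 2.
set B := complex.Re (p 1 0) ^+ 2 + complex.Im (p 1 0) ^+ 2.
have A0 : 0 <= A by rewrite addr_ge0 // sqr_ge0.
have B0 : 0 <= B by rewrite addr_ge0 // sqr_ge0.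
have hAB : A + B = 1.
  apply: complexI; change (cR (A + B) = 1); rewrite cRD /cR !add_Re2_Im2 !normCK -hp braE.
  by rewrite [p 0 0 * _]mulrC [p 1 0 * _]mulrC.
split.
- by rewrite sqrtr_ge0 /= -sqrtr1 ler_sqrt // -/A; lra.
- by rewrite /cR /r normc_def.
- rewrite /Defs.sfun /r sqr_sqrtr // (_ : 1 - A = B); last by lra.
  by rewrite /cR normc_def.
Qed.

Lemma ue_suff (U : op R) (xiR xiL zL zR L Rb : int -> vec R) (W : int -> 'M[C]_2)
  (lam : R) (al be : int -> C) :
  op_eq U (walk_op xiR xiL zL zR) ->
  (forall n, unitary2 (W n)) ->
  (forall n, W n *m xiR n = al n *: e1 R) ->
  (forall n, W n *m xiL n = be n *: e2 R) ->
  (forall n, L n = (expi lam * al (n - 1))^* *: (W n *m zL n)) ->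
  (forall n, Rb n = (expi lam * be (n + 1))^* *: (W n *m zR n)) ->
  unit_equiv U (walk_op (fun=> e1 R) (fun=> e2 R) L Rb).
Proof.
move=> hU hW hR hL hLn hRn; exists lam, W; split => // f lf.
apply: funext => k.
rewrite hU; last exact: l2_adj.
rewrite /walk_op mulmxDr -!scalemxAr hR hL hLn hRn !braZl !rmorphM /= !conjCK -!bra_adj.
rewrite addrK subrK scalerDr !scalerA.
by congr (_ *: _ + _ *: _); ring.
Qed.

Lemma mulmx2E (A B : 'M[C]_2) i j : (A *m B) i j = A i 0 * B 0 j + A i 1 * B 1 j.
Proof.
rewrite mxE !big_ord_recl big_ord0 addr0.
by have -> : lift ord0 ord0 = 1 :> 'I_2 by apply: val_inj.
Qed.

Lemma ord2 (i : 'I_2) : i = 0 \/ i = 1.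
Proof. by case: i => -[|[|//]] Hi; [left|right]; apply: val_inj. Qed.

Lemma mx_eq2 (A B : 'M[C]_2) : A 0 0 = B 0 0 -> A 0 1 = B 0 1 -> A 1 0 = B 1 0 ->
  A 1 1 = B 1 1 -> A = B.
Proof.
move=> h1 h2 h3 h4; apply/matrixP => i j.
by case: (ord2 i) => ->; case: (ord2 j) => ->.
Qed.

Definition Wm (al be : C) (u w : vec R) : 'M[C]_2 :=
  \matrix_(i, j) (if i == 0 then al * (u j 0)^* else be * (w j 0)^*).

Lemma Wm_mul0 al be u w v : (Wm al be u w *m v) 0 0 = al * bra u v.
Proof. by rewrite mxvE braE !mxE /=; ring. Qed.
Lemma Wm_mul1 al be u w v : (Wm al be u w *m v) 1 0 = be * bra w v.
Proof. by rewrite mxvE braE !mxE /=; ring. Qed.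

Lemma Wm_unitary al be u w : `|al| = 1 -> `|be| = 1 -> orthonormal2 u w ->
  unitary2 (Wm al be u w).
Proof.
move=> ha hb [hu hw huw].
have hwu : bra w u = 0 by rewrite -bra_conj huw conjC0.
suff h : Wm al be u w *m adj2 (Wm al be u w) = 1%:M by split => //; apply: mulmx1C.
move: hu hw huw hwu; rewrite !braE => hu hw huw hwu.
have ha' := conjUK ha; have hb' := conjUK hb.
apply: mx_eq2; rewrite mulmx2E /adj2 !mxE /= !rmorphM /= !conjCK.
- rewrite -[RHS]ha' -[in RHS](mulr1 (al^* * al)) -hu; ring.
- rewrite -[RHS](mulr0 (al * be^*)) -huw; ring.
- rewrite -[RHS](mulr0 (be * al^*)) -hwu; ring.
- rewrite -[RHS]hb' -[in RHS](mulr1 (be^* * be)) -hw; ring.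
Qed.

Definition phase (z : C) : C := if z == 0 then 1 else z / `|z|.

Lemma phase_norm z : `|phase z| = 1.
Proof.
rewrite /phase; case: eqP => [_|/eqP hz]; first by rewrite normr1.
by rewrite normrM normfV normr_id mulfV // normr_eq0.
Qed.

Lemma phaseE z : z = phase z * `|z|.
Proof.
rewrite /phase; case: eqP => [->|/eqP hz]; first by rewrite normr0 mulr0.
by rewrite divfK // normr_eq0.
Qed.

Lemma phase_conj z : (phase z)^* * z = `|z|.
Proof.
rewrite {2}[z]phaseE mulrA conjUK ?mul1r //; exact: phase_norm.
Qed.

Lemma expi0 : expi (0 : R) = 1.
Proof. by rewrite /expi cos0 sin0. Qed.

Lemma adj2_1 : adj2 (1%:M : 'M[C]_2) = 1%:M.
Proof. by apply: mx_eq2; rewrite !mxE /= ?conjC1 ?conjC0. Qed.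

Lemma unitary2_1 : unitary2 (1%:M : 'M[C]_2).
Proof. by rewrite /unitary2 adj2_1 mulmx1. Qed.

Lemma ue_refl (rpm r0 nu1 nu2 : R) : unit_equiv (Ustd rpm r0 nu1 nu2) (Ustd rpm r0 nu1 nu2).
Proof.
have := @ue_suff (Ustd rpm r0 nu1 nu2) (fun=> e1 R) (fun=> e2 R)
  (braL rpm r0 nu1 nu2) (braR rpm r0 nu1 nu2) (braL rpm r0 nu1 nu2) (braR rpm r0 nu1 nu2)
  (fun=> 1%:M) 0 (fun=> 1) (fun=> 1).
apply => //.
- by move=> n; exact: unitary2_1.
- by move=> n; rewrite mul1mx scale1r.
- by move=> n; rewrite mul1mx scale1r.
- by move=> n; rewrite expi0 mulr1 conjC1 scale1r mul1mx.
- by move=> n; rewrite expi0 mulr1 conjC1 scale1r mul1mx.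
Qed.


Lemma orth2' (p q : vec R) : bra p p = 1 -> bra q q = 1 -> bra p q = 0 ->
  exists E : C, [/\ `|E| = 1, q 0 0 = - E * (p 1 0)^* & q 1 0 = E * (p 0 0)^*].
Proof. by move=> h1 h2 h3; exists (p 0 0 * q 1 0 - p 1 0 * q 0 0); apply: orth2. Qed.

Lemma unit_vec_r' (p : vec R) : bra p p = 1 ->
  exists r : R, [/\ 0 <= r <= 1, cR r = `|p 0 0| & cR (Defs.sfun r) = `|p 1 0|].
Proof. by move=> h; eexists; apply: unit_vec_r. Qed.

Lemma normV1 (z : C) : `|z| = 1 -> `|z^-1| = 1.
Proof. by move=> h; rewrite normfV h invr1. Qed.

Lemma braZZ (c c' : C) x y : bra (c *: x) (c' *: y) = c^* * c' * bra x y.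
Proof. by rewrite braZl braZr mulrA. Qed.

End S.
Unset Implicit Arguments. Set Strict Implicit.
Section S.
Variable R : realType.
Local Notation C := R[i].
Implicit Types (x y : vec R).

Lemma nphase (z : R[i]) : `|z| = (phase z)^-1 * z.
Proof. by rewrite -conjU ?phase_conj // phase_norm. Qed.

Lemma conj_phase (z : R[i]) : z^* = (phase z)^-1 * `|z|.
Proof.
rewrite {1}[z]phaseE rmorphM /= conj_normC conjU //; exact: phase_norm.
Qed.

Lemma int_cases (n : int) : n != 0 ->
  [/\ (0 <= n - 1) = (0 < n), (0 <= n) = (0 < n), (1 <= n) = (0 < n) & (1 <= n + 1) = (0 < n)].
Proof. move=> hn; split; apply/idP/idP => ?; lia. Qed.

Lemma part1 (U : op R) : qw_one_defect U ->
  exists rpm r0 nu1 nu2 : R,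
    [/\ 0 <= rpm <= 1, 0 <= r0 <= 1 & unit_equiv U (Ustd rpm r0 nu1 nu2)].
Proof.
case=> _ [xiR [xiL [zL [zR [hxi hz hU [xi1 [xi2 [z1 [z2 hdef]]]]]]]]].
have hdef' : forall n : int, n != 0 ->
    [/\ xiR n = xiR 1, xiL n = xiL 1, zL n = zL 1 & zR n = zR 1].
  move=> n hn; case: (hdef n hn) => -> -> -> ->.
  by case: (hdef 1 isT) => -> -> -> ->.
have hxiLR : forall n, bra (xiL n) (xiR n) = 0.
  by move=> n; case: (hxi n) => _ _ h; rewrite -bra_conj h conjC0.
set V1 := Wm 1 1 (xiR 1) (xiL 1).
have hV1 : unitary2 V1 by apply: Wm_unitary; rewrite ?normr1.
set p := V1 *m zL 1; set q := V1 *m zR 1.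
have hp : bra p p = 1 by rewrite bra_unit //; case: (hz 1).
have hq : bra q q = 1 by rewrite bra_unit //; case: (hz 1).
have hpq : bra p q = 0 by rewrite bra_unit //; case: (hz 1).
have [E [hE hc hd]] := orth2' hp hq hpq.
have [rpm [hr01 hra hrb]] := unit_vec_r' hp.
have p0 : bra (xiR 1) (zL 1) = p 0 0 by rewrite Wm_mul0 mul1r.
have p1 : bra (xiL 1) (zL 1) = p 1 0 by rewrite Wm_mul1 mul1r.
have q0 : bra (xiR 1) (zR 1) = q 0 0 by rewrite Wm_mul0 mul1r.
have q1 : bra (xiL 1) (zR 1) = q 1 0 by rewrite Wm_mul1 mul1r.
clearbody p q.
have [th hth] := arg_ex hE.
set mu := expi (th / 2).
have hmu : `|mu| = 1 := expi_norm _.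
have hmu2 : mu * mu = E by rewrite -expiD -splitr.
have mudef : expi (th / 2) = mu by [].
clearbody mu.
set pa := phase (p 0 0); set pb := phase (p 1 0).
have hpa : `|pa| = 1 := phase_norm _.
have hpb : `|pb| = 1 := phase_norm _.
rewrite nphase -/pa in hra; rewrite nphase -/pb in hrb.
rewrite conj_phase -/pb in hc; rewrite conj_phase -/pa in hd.
set x := mu / pa; set y := pa / pb.
have hx : `|x| = 1 by rewrite normM1 ?normV1.
have hy : `|y| = 1 by rewrite normM1 ?normV1.
have xdef : x = mu / pa by []. have ydef : y = pa / pb by [].
clearbody x y.
set V0 := Wm 1 1 (xiR 0) (xiL 0).
have hV0 : unitary2 V0 by apply: Wm_unitary; rewrite ?normr1.
set P := V0 *m zL 0.
have hP : bra P P = 1 by rewrite bra_unit //; case: (hz 0).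
have [r0 [hr001 hr0a hr0b]] := unit_vec_r' hP.
have P0 : bra (xiR 0) (zL 0) = P 0 0 by rewrite Wm_mul0 mul1r.
have P1 : bra (xiL 0) (zL 0) = P 1 0 by rewrite Wm_mul1 mul1r.
clearbody P.
set ph0 := phase (P 0 0); set ph1 := phase (P 1 0).
have hph0 : `|ph0| = 1 := phase_norm _.
have hph1 : `|ph1| = 1 := phase_norm _.
rewrite nphase -/ph0 in hr0a; rewrite nphase -/ph1 in hr0b.
clearbody ph0 ph1.
set t := mu / x / ph0.
have ht : `|t| = 1 by rewrite !normM1 ?normV1.
have tdef : t = mu / x / ph0 by [].
clearbody t.
set E1 := x * y * ph1 / mu.
have hE1 : `|E1| = 1 by rewrite !normM1 ?normV1.
have E1def : E1 = x * y * ph1 / mu by [].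
clearbody E1.
have [nu1 hnu1] := arg_ex hE1.
pose al (n : int) := x ^ n * (if 0 <= n then t else 1).
pose be (n : int) := y * x ^ n * (if 1 <= n then t else 1).
have hal : forall n, `|al n| = 1.
  by move=> n; rewrite /al normM1 ?normXz1 //; case: ifP; rewrite ?normr1.
have hbe : forall n, `|be n| = 1.
  move=> n; rewrite /be; apply: normM1; first by apply: normM1 => //; exact: normXz1.
  by case: ifP; rewrite ?normr1.
have aldef : forall n, al n = x ^ n * (if 0 <= n then t else 1) by [].
have bedef : forall n, be n = y * x ^ n * (if 1 <= n then t else 1) by [].
clearbody al be.
pose W n := Wm (al n) (be n) (xiR n) (xiL n).
have hW : forall n, unitary2 (W n) by move=> n; apply: Wm_unitary.
have nz : forall z : C, `|z| = 1 -> z != 0 by move=> z; apply: U_neq0.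
have hL0 : forall nu2, braL rpm r0 nu1 nu2 0 = (expi (th / 2) * al (0 - 1))^* *: (W 0 *m zL 0).
  move=> nu2; rewrite mudef conjU ?normM1 //.
  apply: vec_eq; rewrite [(_ *: (_ *m _)) _ _]mxE /W ?Wm_mul0 ?Wm_mul1 !mxE /= ?P0 ?P1.
  - rewrite !aldef sub0r /= expr0z exprN1 !mulr1 mulr0 addr0 hr0a tdef.
    field. by rewrite !nz.
  - rewrite aldef bedef sub0r /= expr0z exprN1 !mulr1 mulr0 add0r hnu1 hr0b E1def.
    field. by rewrite !nz.
set u := braL rpm r0 nu1 0 0.
set w := (expi (th / 2) * be (0 + 1))^* *: (W 0 *m zR 0).
have hu : bra u u = 1.
  rewrite /u hL0 braZZ bra_unit // conjCK -normCK normM1 ?expr1n ?mul1r ?mudef //.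
  by case: (hz 0) => ->.
have hw : bra w w = 1.
  rewrite /w braZZ bra_unit // conjCK -normCK normM1 ?expr1n ?mul1r ?mudef //.
  by case: (hz 0) => _ ->.
have huw : bra u w = 0.
  by rewrite /u hL0 /w braZZ bra_unit //; case: (hz 0) => _ _ ->; rewrite mulr0.
have [E' [hE' hw0 hw1]] := orth2' hu hw huw.
set E2 := E' / E1.
have hE2 : `|E2| = 1 by rewrite !normM1 ?normV1.
have E2def : E2 = E' / E1 by [].
clearbody E2.
have [nu2 hnu2] := arg_ex hE2.
exists rpm, r0, nu1, nu2; split => //.
have := @ue_suff _ U xiR xiL zL zR (braL rpm r0 nu1 nu2) (braR rpm r0 nu1 nu2) W (th / 2) al be hU hW.
apply.
- move=> n; apply: vec_eq; rewrite /W ?Wm_mul0 ?Wm_mul1 !mxE /= ?hxiLR ?mulr0 //.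
  by case: (hxi n) => -> _ _.
- move=> n; apply: vec_eq; rewrite /W ?Wm_mul0 ?Wm_mul1 !mxE /= ?mulr0 ?mulr1.
    by case: (hxi n) => _ _ ->; rewrite mulr0.
  by case: (hxi n) => _ -> _; rewrite mulr1.
- move=> n; case: (eqVneq n 0) => [->|hn]; first exact: hL0.
  rewrite mudef conjU ?normM1 // /braL (negbTE hn).
  case: (hdef' n hn) => hR1 hL1 hzL hzR.
  case: (int_cases n hn) => c1 c2 c3 c4.
  have hK : `|x ^ n| = 1 := normXz1 n hx.
  set g := if 0 < n then t else 1.
  have hg : g != 0 by rewrite /g; case: ifP => _; [exact: nz | exact: oner_neq0].
  apply: vec_eq; rewrite [(_ *: (_ *m _)) _ _]mxE /W ?Wm_mul0 ?Wm_mul1 !mxE /=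
    ?hR1 ?hL1 ?hzL ?p0 ?p1 !aldef ?bedef ?c1 ?c2 ?c3 -/g (expfzDr n (-1) (nz _ hx)) exprN1.
  - move: (x ^ n) hK => K hK; rewrite !mulr1 mulr0 addr0 hra xdef.
    field; by rewrite ?hg ?nz.
  - move: (x ^ n) hK => K hK; rewrite !mulr1 mulr0 add0r hrb xdef ydef.
    field; by rewrite ?hg ?nz.
- move=> n; case: (eqVneq n 0) => [->|hn].
    change (braR rpm r0 nu1 nu2 0 = w).
    have u0 : u 0 0 = cR r0 by rewrite /u /braL eqxx !mxE /= mulr1 mulr0 addr0.
    have u1 : u 1 0 = expi nu1 * cR (Defs.sfun r0) by rewrite /u /braL eqxx !mxE /= mulr1 mulr0 add0r.
    apply: vec_eq; rewrite ?hw0 ?hw1 ?u0 ?u1 /braR eqxx !mxE /= ?rmorphM /= cR_conj.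
    - rewrite mulr1 mulr0 addr0 hnu2 hnu1 E2def conjU ?hE1 //.
      field; by rewrite nz.
    - rewrite mulr1 mulr0 add0r expiD hnu2 hnu1 E2def.
      field; by rewrite nz.
  rewrite mudef conjU ?normM1 // /braR (negbTE hn).
  case: (hdef' n hn) => hR1 hL1 hzL hzR.
  case: (int_cases n hn) => c1 c2 c3 c4.
  have hK : `|x ^ n| = 1 := normXz1 n hx.
  set g := if 0 < n then t else 1.
  have hg : g != 0 by rewrite /g; case: ifP => _; [exact: nz | exact: oner_neq0].
  apply: vec_eq; rewrite [(_ *: (_ *m _)) _ _]mxE /W ?Wm_mul0 ?Wm_mul1 !mxE /=
    ?hR1 ?hL1 ?hzR ?q0 ?q1 ?hc ?hd ?aldef !bedef ?c2 ?c3 ?c4 -/g (expfzDr n 1 (nz _ hx)) expr1z.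
  - move: (x ^ n) hK => K hK; rewrite !mulr1 mulr0 addr0 hrb (nphase (p 1 0)) -/pb -hmu2 xdef ydef.
    field; by rewrite ?hg ?nz.
  - move: (x ^ n) hK => K hK; rewrite !mulr1 mulr0 add0r hra (nphase (p 0 0)) -/pa -hmu2 xdef ydef.
    field; by rewrite ?hg ?nz.
Qed.
End S.
Section S.
Variable R : realType.
Local Notation C := R[i].
Implicit Types (x y : vec R).

Lemma expi_inj (a b : R) : 0 <= a < 2 * pi -> 0 <= b < 2 * pi -> expi a = expi b -> a = b.
Proof.
move=> /andP[ha1 ha2] /andP[hb1 hb2]; rewrite /expi => -[hc hs].
have pi0 := @pi_gt0 R.
have key : forall c d : R, 0 <= c <= pi -> pi < d < 2 * pi -> sin c = sin d -> False.
  move=> c d hc0 /andP[hd1 hd2] hsd; have h1 := sin_ge0_pi hc0.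
  have h2 : 0 < sin (d - pi) by apply: sin_gt0_pi; apply/andP; split; lra.
  have : sin d = - sin (d - pi) by rewrite -{1}(subrK pi d) sinDpi.
  lra.
have cpi : forall c : R, cos (c - pi) = - cos c.
  by move=> c; rewrite -[in RHS](subrK pi c) cosDpi opprK.
case: (lerP a pi) => ha'; case: (lerP b pi) => hb'.
- by apply: cos_inj => //; rewrite in_itv /=; apply/andP; split.
- by exfalso; apply: (key a b) => //; apply/andP; split.
- by exfalso; apply: (key b a) => //; apply/andP; split.
- have : a - pi = b - pi.
    apply: cos_inj; rewrite ?in_itv /= ?cpi ?hc //; apply/andP; split; lra.
  lra.
Qed.

Lemma cRM (a b : R) : cR (a * b) = cR a * cR b.
Proof. by apply/eqP; rewrite eq_complex /= !mulr0 !mul0r subr0 addr0 !eqxx. Qed.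

Lemma sqC (z : C) (c : R) : `|z| = 1 -> (z * cR c)^* * (z * cR c) = cR (c ^+ 2).
Proof.
move=> h; rewrite rmorphM /= cR_conj mulrACA conjUK // mul1r -cRM; congr cR; ring.
Qed.

Lemma sfun_sq (r : R) : 0 <= r <= 1 -> Defs.sfun r ^+ 2 = 1 - r ^+ 2.
Proof. by move=> /andP[h1 h2]; rewrite /Defs.sfun sqr_sqrtr //; nra. Qed.

Lemma braL_unit (rpm r0 nu1 nu2 : R) n : 0 <= rpm <= 1 -> 0 <= r0 <= 1 ->
  bra (braL rpm r0 nu1 nu2 n) (braL rpm r0 nu1 nu2 n) = 1.
Proof.
move=> h1 h2; rewrite braE /braL; case: eqP => _; rewrite !mxE /= !mulr1 !mulr0 ?addr0 ?add0r.
- rewrite -[cR r0](mul1r) sqC ?normr1 // sqC ?expi_norm // -cRD sfun_sq //.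
  by congr cR; ring.
- rewrite -[cR rpm](mul1r) -[cR (Defs.sfun rpm)](mul1r) !sqC ?normr1 // -cRD sfun_sq //.
  by congr cR; ring.
Qed.

Lemma braR_unit (rpm r0 nu1 nu2 : R) n : 0 <= rpm <= 1 -> 0 <= r0 <= 1 ->
  bra (braR rpm r0 nu1 nu2 n) (braR rpm r0 nu1 nu2 n) = 1.
Proof.
move=> h1 h2; rewrite braE /braR; case: eqP => _; rewrite !mxE /= !mulr1 !mulr0 ?addr0 ?add0r.
- rewrite -mulNr sqC; last by rewrite ?normrN expi_norm.
  rewrite sqC ?expi_norm ?normrN ?expi_norm //.
  by apply/eqP; rewrite eq_complex /= addr0 eqxx andbT sfun_sq // subrK.
- apply/eqP; rewrite /cR eq_complex /=; apply/andP; split; apply/eqP; last by ring.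
  have := sfun_sq _ h1; rewrite expr2 => h; rewrite mulrNN h; ring.
Qed.
End S.
Section S.
Variable R : realType.
Local Notation C := R[i].
Implicit Types (x y : vec R).

Lemma Ustd_at_m1 (a b c d : R) (m : int) (w : vec R) :
  Ustd a b c d (at_site m w) (m - 1) = bra (braL a b c d m) w *: e1 R.
Proof.
rewrite /Ustd /at_site subrK eqxx (_ : (m - 1 - 1 == m) = false) ?bra0r ?scale0r ?addr0 //.
by apply/negbTE; apply/eqP; lia.
Qed.

Lemma Ustd_at_p1 (a b c d : R) (m : int) (w : vec R) :
  Ustd a b c d (at_site m w) (m + 1) = bra (braR a b c d m) w *: e2 R.
Proof.
rewrite /Ustd /at_site addrK eqxx (_ : (m + 1 + 1 == m) = false) ?bra0r ?scale0r ?add0r //.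
by apply/negbTE; apply/eqP; lia.
Qed.

Lemma part2_extract (rpm r0 nu1 nu2 rpm' r0' nu1' nu2' : R) :
  0 <= rpm <= 1 -> 0 <= r0 <= 1 ->
  unit_equiv (Ustd rpm r0 nu1 nu2) (Ustd rpm' r0' nu1' nu2') ->
  exists (mu : C) (al be : int -> C),
    [/\ `|mu| = 1, (forall k, `|al k| = 1 /\ `|be k| = 1),
      forall m, braL rpm' r0' nu1' nu2' m 0 0 =
         (mu * al (m - 1))^* * al m * braL rpm r0 nu1 nu2 m 0 0,
      forall m, braL rpm' r0' nu1' nu2' m 1 0 =
         (mu * al (m - 1))^* * be m * braL rpm r0 nu1 nu2 m 1 0 &
      forall m, braR rpm' r0' nu1' nu2' m 0 0 =
         (mu * be (m + 1))^* * al m * braR rpm r0 nu1 nu2 m 0 0].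
Proof.
move=> h1 h2 [lam [W [hW H]]].
set L := braL rpm r0 nu1 nu2; set Rr := braR rpm r0 nu1 nu2.
set L' := braL rpm' r0' nu1' nu2'; set R' := braR rpm' r0' nu1' nu2'.
have Hs : forall m v k, expi lam *: (W k *m Ustd rpm r0 nu1 nu2 (at_site m (adj2 (W m) *m v)) k)
    = Ustd rpm' r0' nu1' nu2' (at_site m v) k.
  move=> m v k; have := H _ (l2_at_site m v) => /(congr1 (fun F => F k)) /= <-.
  have -> : (fun n => adj2 (W n) *m at_site m v n) = at_site m (adj2 (W m) *m v) by
    apply: funext => n; rewrite /at_site; case: eqP => [->|]; rewrite ?mulmx0.
  by [].
have HA : forall m v, expi lam *: (W (m - 1) *m (bra (L m) (adj2 (W m) *m v) *: e1 R))
    = bra (L' m) v *: e1 R.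
  by move=> m v; rewrite -Ustd_at_m1 -Ustd_at_m1 Hs.
have HB : forall m v, expi lam *: (W (m + 1) *m (bra (Rr m) (adj2 (W m) *m v) *: e2 R))
    = bra (R' m) v *: e2 R.
  by move=> m v; rewrite -Ustd_at_p1 -Ustd_at_p1 Hs.
have hmu : `|expi lam| = 1 := expi_norm _.
have mu0 : expi lam != 0 := U_neq0 hmu.
have W10 : forall k, W k 1 0 = 0.
  move=> k; have := HA (k + 1) (W (k + 1) *m L (k + 1)).
  rewrite -bra_adj bra_unit // braL_unit // addrK => /(congr1 (fun v : vec R => v 1 0)).
  rewrite [LHS]mxE mxvE !mxE /= !mulr1 !mulr0 addr0 => /eqP.
  by rewrite mulf_eq0 (negbTE mu0) /= => /eqP.
have W01 : forall k, W k 0 1 = 0.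
  move=> k; have := HB (k - 1) (W (k - 1) *m Rr (k - 1)).
  rewrite -bra_adj bra_unit // braR_unit // subrK => /(congr1 (fun v : vec R => v 0 0)).
  rewrite [LHS]mxE mxvE !mxE /= !mulr1 !mulr0 add0r => /eqP.
  by rewrite mulf_eq0 (negbTE mu0) /= => /eqP.
have n1 : forall z : C, z^* * z = 1 -> `|z| = 1.
  by move=> z hz; apply/eqP; rewrite -sqrp_eq1 // normCK mulrC hz.
exists (expi lam), (fun k => W k 0 0), (fun k => W k 1 1); split => //.
- move=> k; case: (hW k) => h _; split; apply: n1.
    by have := congr1 (fun M : 'M[C]_2 => M 0 0) h; rewrite mulmx2E /adj2 !mxE /= W10 conjC0 mul0r addr0.
  by have := congr1 (fun M : 'M[C]_2 => M 1 1) h; rewrite mulmx2E /adj2 !mxE /= W01 conjC0 mul0r add0r.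
- move=> m; have := HA m (e1 R) => /(congr1 (fun v : vec R => v 0 0)).
  rewrite -bra_adj [LHS]mxE mxvE !mxE /= !braE !mxvE W01 W10 !mxE /=.
  rewrite ?mul0r ?mulr0 ?mulr1 ?addr0 ?add0r => h.
  apply: (can_inj (@conjCK _)); rewrite -h !rmorphM /= !conjCK; ring.
- move=> m; have := HA m (e2 R) => /(congr1 (fun v : vec R => v 0 0)).
  rewrite -bra_adj [LHS]mxE mxvE !mxE /= !braE !mxvE W01 W10 !mxE /=.
  rewrite ?mul0r ?mulr0 ?mulr1 ?addr0 ?add0r => h.
  apply: (can_inj (@conjCK _)); rewrite -h !rmorphM /= !conjCK; ring.
- move=> m; have := HB m (e1 R) => /(congr1 (fun v : vec R => v 1 0)).
  rewrite -bra_adj [LHS]mxE mxvE !mxE /= !braE !mxvE W01 W10 !mxE /=.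
  rewrite ?mul0r ?mulr0 ?mulr1 ?addr0 ?add0r => h.
  apply: (can_inj (@conjCK _)); rewrite -h !rmorphM /= !conjCK; ring.
Qed.
End S.
Set Implicit Arguments. Unset Strict Implicit.
Section S.
Variable R : realType.
Local Notation C := R[i].
Implicit Types (x y : vec R).

Lemma pos_unit (r r' : R) (z : C) : 0 < r -> 0 < r' -> `|z| = 1 ->
  cR r' = z * cR r -> r' = r /\ z = 1.
Proof.
move=> hr hr' hz h.
have e : cR r' = cR r.
  have := congr1 Num.norm h; rewrite normrM hz mul1r !ger0_norm //;
    by rewrite /cR ler0c ltW.
have hrr : r' = r by apply: complexI.
split => //; move: h; rewrite e => /esym h.
apply: (mulIf _ ); last by rewrite mul1r; exact: h.
by apply/eqP => /complexI; apply/eqP; rewrite gt_eqF.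
Qed.

Lemma unit_eq (z w : C) : `|z| = 1 -> z^* * w = 1 -> w = z.
Proof.
move=> hz h; have h2 : z * z^* = 1 by rewrite mulrC conjUK.
by rewrite -[w]mul1r -h2 -mulrA h mulr1.
Qed.

Lemma sfun_gt0 (r : R) : 0 < r < 1 -> 0 < Defs.sfun r.
Proof. by move=> /andP[h1 h2]; rewrite /Defs.sfun sqrtr_gt0; nra. Qed.

Lemma bL0 (a b c d : R) m : braL a b c d m 0 0 = if m == 0 then cR b else cR a.
Proof. by rewrite /braL; case: eqP => _; rewrite !mxE /= mulr1 mulr0 addr0. Qed.
Lemma bL1 (a b c d : R) m : braL a b c d m 1 0 =
  if m == 0 then expi c * cR (Defs.sfun b) else cR (Defs.sfun a).
Proof. by rewrite /braL; case: eqP => _; rewrite !mxE /= mulr1 mulr0 add0r. Qed.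
Lemma bR0 (a b c d : R) m : braR a b c d m 0 0 =
  if m == 0 then - (expi d * cR (Defs.sfun b)) else - cR (Defs.sfun a).
Proof. by rewrite /braR; case: eqP => _; rewrite !mxE /= mulr1 mulr0 addr0. Qed.

Lemma part2 (rpm r0 nu1 nu2 rpm' r0' nu1' nu2' : R) :
  0 < rpm < 1 -> 0 < r0 < 1 -> 0 < rpm' < 1 -> 0 < r0' < 1 ->
  0 <= nu1 < 2 * pi -> 0 <= nu2 < 2 * pi ->
  0 <= nu1' < 2 * pi -> 0 <= nu2' < 2 * pi ->
  unit_equiv (Ustd rpm r0 nu1 nu2) (Ustd rpm' r0' nu1' nu2') ->
  [/\ rpm = rpm', r0 = r0', nu1 = nu1' & nu2 = nu2'].
Proof.
move=> hr hr0 hr' hr0' hn1 hn2 hn1' hn2' hue.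
have w1 : forall x : R, 0 < x < 1 -> 0 <= x <= 1.
  by move=> x /andP[a b]; rewrite ltW // ltW.
have [mu [al [be [hmu hab EL0 EL1 ER0]]]] := @part2_extract R _ _ _ _ _ _ _ _ (w1 _ hr) (w1 _ hr0) hue.
have hal : forall k, `|al k| = 1 by move=> k; case: (hab k).
have hbe : forall k, `|be k| = 1 by move=> k; case: (hab k).

have pr : forall x : R, 0 < x < 1 -> 0 < x by move=> x /andP[].
have := EL0 1; rewrite !bL0 /= => h.
have [erpm _] := pos_unit (pr _ hr) (pr _ hr') (normM1 (normC1 (normM1 hmu (hal _))) (hal _)) h.
subst rpm'.
have hs := sfun_gt0 hr.
have A2 : forall m : int, m != 0 -> be m = mu * al (m - 1).
  move=> m hm; have := EL1 m; rewrite !bL1 (negbTE hm) => h'.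
  have [_ z1] := pos_unit hs hs (normM1 (normC1 (normM1 hmu (hal _))) (hbe _)) h'.
  by apply: unit_eq; rewrite ?normM1 // -mulrA.
have A3 : forall m : int, m != 0 -> al m = mu * be (m + 1).
  move=> m hm; have := ER0 m; rewrite !bR0 (negbTE hm) mulrN => /oppr_inj h'.
  have [_ z1] := pos_unit hs hs (normM1 (normC1 (normM1 hmu (hbe _))) (hal _)) h'.
  by apply: unit_eq; rewrite ?normM1.
have hmu2 : mu * mu = 1.
  have e1 := A3 1 isT; have e2 := A2 (1 + 1) isT.
  rewrite e2 addrK mulrA in e1.
  apply: (mulIf (U_neq0 (hal 1))); rewrite mul1r; exact/esym.
have am1 := A3 (-1) isT; rewrite addNr in am1.
have b1 := A2 1 isT; rewrite subrr in b1.
have cR0 : forall x : R, 0 < x -> cR x != 0.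
  by move=> x hx; apply/eqP => /complexI; apply/eqP; rewrite gt_eqF.
have := EL0 0; rewrite !bL0 /= sub0r am1 mulrA hmu2 mul1r => h0.
have [er0 z0] := pos_unit (pr _ hr0) (pr _ hr0') (normM1 (normC1 (hbe 0)) (hal 0)) h0.
subst r0'.
have ab0 : al 0 = be 0 by apply: unit_eq.
have hs0 := sfun_gt0 hr0.
have := EL1 0; rewrite !bL1 /= sub0r am1 mulrA hmu2 mul1r conjUK // mul1r => h1.
have e1 : expi nu1' = expi nu1.
  by apply: (mulIf (cR0 _ hs0)).
have := ER0 0; rewrite !bR0 /= add0r b1 mulrA hmu2 mul1r ab0 conjUK // mul1r => /oppr_inj h2.
have e2 : expi nu2' = expi nu2.
  by apply: (mulIf (cR0 _ hs0)).
by split => //; apply: expi_inj.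
Qed.
End S.
Unset Implicit Arguments. Set Strict Implicit.

Theorem corollary2p11 (R : realType) :
  (forall U : op R, qw_one_defect U ->
     exists rpm r0 nu1 nu2 : R,
       [/\ 0 <= rpm <= 1, 0 <= r0 <= 1 & unit_equiv U (Ustd rpm r0 nu1 nu2)])
  /\
  (forall rpm r0 nu1 nu2 rpm' r0' nu1' nu2' : R,
     0 < rpm < 1 -> 0 < r0 < 1 -> 0 < rpm' < 1 -> 0 < r0' < 1 ->
     0 <= nu1 < 2 * pi -> 0 <= nu2 < 2 * pi ->
     0 <= nu1' < 2 * pi -> 0 <= nu2' < 2 * pi ->
     (unit_equiv (Ustd rpm r0 nu1 nu2) (Ustd rpm' r0' nu1' nu2') <->
      [/\ rpm = rpm', r0 = r0', nu1 = nu1' & nu2 = nu2'])).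
Proof.
split.
- by move=> U hU; exact: (part1 R U hU).
- move=> rpm r0 nu1 nu2 rpm' r0' nu1' nu2' h1 h2 h3 h4 h5 h6 h7 h8; split.
  + exact: part2.
  + by case=> <- <- <- <-; exact: ue_refl.
Qed.
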